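(* Let $n\ge 2$ be an integer, $k,c_b>0$, $\rho_0>0$, and let $\lambda_{1,0}\le\cdots\le\lambda_{n,0}$ be real numbers. Consider the system $$\lambda_i'=-\lambda_i^2+\frac{k}{n}(\rho-c_b)\ (i=1,\dots,n),\qquad \rho'=-\rho\lambda,\quad \lambda=\sum_{i=1}^n\lambda_i,\qquad \rho(0)=\rho_0,\ \lambda_i(0)=\lambda_{i,0},$$ and suppose its maximal interval of existence is $[0,t_B)$ with $0<t_B<\infty$. Then there is an index $i$ with $\lim_{t\to t_B^-}|\lambda_i(t)|=\infty$.
   Context: Solutions are real-valued and continuously differentiable on $[0,t_B)$. *)

(* Defs.v *)
From Stdlib Require Import Reals List.
From Coquelicot Require Import Coquelicot.
Open Scope R_scope.

(* lambda(t) = sum_{i=0}^{n-1} lam i t  (indices 0..n-1 stand for 1..n) *)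
Definition lamsum (n : nat) (lam : nat -> R -> R) (t : R) : R :=
  fold_right Rplus 0 (map (fun i => lam i t) (seq 0 n)).

(* (lam, rho) is a solution of the system on [0, T):
   initial conditions at 0, right-continuity at 0, and the ODE holds
   (with genuine derivatives) at every t in (0, T).  Since the right-hand side
   is continuous, this is the same as a C^1 solution on [0,T) (one-sided
   derivative at 0). *)
Definition is_solution (n : nat) (k cb rho0 : R) (lam0 : nat -> R) (T : R)
    (lam : nat -> R -> R) (rho : R -> R) : Prop :=
  (forall i, (i < n)%nat -> lam i 0 = lam0 i) /\
  rho 0 = rho0 /\
  (forall i, (i < n)%nat -> filterlim (lam i) (at_right 0) (locally (lam i 0))) /\
  filterlim rho (at_right 0) (locally (rho 0)) /\
  (forall t, 0 < t < T ->
     (forall i, (i < n)%nat ->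
        is_derive (lam i) t (- (lam i t) ^ 2 + k / INR n * (rho t - cb))) /\
     is_derive rho t (- rho t * lamsum n lam t)).

(* Main.v *)
Require Import Defs.
From Stdlib Require Import Reals List.
From Coquelicot Require Import Coquelicot.
From Stdlib Require Import Lra Lia Classical.
Open Scope R_scope.

Definition sumn (n : nat) (f : nat -> R) : R :=
  fold_right Rplus 0 (map f (seq 0 n)).

Lemma sumn_0 f : sumn 0 f = 0.
Proof. reflexivity. Qed.

Lemma fold_app (l1 l2 : list R) :
  fold_right Rplus 0 (l1 ++ l2) = fold_right Rplus 0 l1 + fold_right Rplus 0 l2.
Proof. induction l1; simpl; [lra|rewrite IHl1; lra]. Qed.

Lemma sumn_S n f : sumn (S n) f = sumn n f + f n.
Proof. unfold sumn. rewrite seq_S, map_app, fold_app. simpl. lra. Qed.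

Lemma sumn_ext n f g : (forall i, (i < n)%nat -> f i = g i) -> sumn n f = sumn n g.
Proof.
  induction n; intros H; [reflexivity|]. rewrite !sumn_S, IHn; [rewrite H; auto|].
  intros; apply H; lia.
Qed.

Lemma sumn_le n f g : (forall i, (i < n)%nat -> f i <= g i) -> sumn n f <= sumn n g.
Proof.
  induction n; intros H; [rewrite !sumn_0; lra|]. rewrite !sumn_S.
  assert (f n <= g n) by (apply H; lia). assert (sumn n f <= sumn n g) by (apply IHn; intros; apply H; lia). lra.
Qed.

Lemma sumn_plus n f g : sumn n (fun i => f i + g i) = sumn n f + sumn n g.
Proof. induction n; [rewrite !sumn_0; lra|]. rewrite !sumn_S, IHn. lra. Qed.

Lemma sumn_scal n c f : sumn n (fun i => c * f i) = c * sumn n f.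
Proof. induction n; [rewrite !sumn_0; lra|]. rewrite !sumn_S, IHn. lra. Qed.

Lemma sumn_const n c : sumn n (fun _ => c) = INR n * c.
Proof. induction n; [rewrite !sumn_0; simpl; lra|]. rewrite !sumn_S, IHn, S_INR. lra. Qed.

Lemma sumn_nonneg n f : (forall i, (i < n)%nat -> 0 <= f i) -> 0 <= sumn n f.
Proof. intros H. rewrite <- (Rmult_0_r (INR n)), <- sumn_const. apply sumn_le; auto. Qed.

Lemma sumn_term_le n f j : (forall i, (i < n)%nat -> 0 <= f i) -> (j < n)%nat -> f j <= sumn n f.
Proof.
  induction n; intros H Hj; [lia|]. rewrite sumn_S.
  destruct (Nat.eq_dec j n) as [->|Hne].
  - assert (0 <= sumn n f) by (apply sumn_nonneg; intros; apply H; lia). lra.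
  - assert (f j <= sumn n f) by (apply IHn; [intros; apply H; lia|lia]).
    assert (0 <= f n) by (apply H; lia). lra.
Qed.

Lemma sumn_abs n f : Rabs (sumn n f) <= sumn n (fun i => Rabs (f i)).
Proof.
  induction n; [rewrite !sumn_0, Rabs_R0; lra|]. rewrite !sumn_S.
  eapply Rle_trans; [apply Rabs_triang|]. lra.
Qed.

Lemma is_derive_sumn n (f : nat -> R -> R) (df : nat -> R) x :
  (forall i, (i < n)%nat -> is_derive (f i) x (df i)) ->
  is_derive (fun t => sumn n (fun i => f i t)) x (sumn n df).
Proof.
  induction n; intros H.
  - rewrite sumn_0. apply (is_derive_ext (fun _ => 0)); [intros; reflexivity|].
    apply (is_derive_const 0).
  - rewrite sumn_S. apply (is_derive_ext (fun t => sumn n (fun i => f i t) + f n t)).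
    + intros; rewrite sumn_S; reflexivity.
    + apply (is_derive_plus (fun t => sumn n (fun i => f i t)) (f n)).
      * apply IHn; intros; apply H; lia.
      * apply H; lia.
Qed.

Lemma mvt_open (f df : R -> R) a b : a < b ->
  (forall c, a <= c <= b -> is_derive f c (df c)) ->
  exists c, a < c < b /\ f b - f a = df c * (b - a).
Proof.
  intros Hab Hd. destruct (MVT_cor2 f df a b Hab) as [c [Hc1 Hc2]].
  - intros c Hc. apply is_derive_Reals. auto.
  - exists c; split; auto.
Qed.

Lemma deriv_lb (f df : R -> R) a b m : a <= b ->
  (forall c, a <= c <= b -> is_derive f c (df c)) ->
  (forall c, a <= c <= b -> m <= df c) -> m * (b - a) <= f b - f a.
Proof.
  intros Hab Hd Hm. destruct (Req_dec a b) as [->|Hne]; [lra|].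
  destruct (mvt_open f df a b) as [c [Hc E]]; [lra|auto|].
  rewrite E. apply Rmult_le_compat_r; [lra|]. apply Hm; lra.
Qed.

Lemma deriv_ub (f df : R -> R) a b m : a <= b ->
  (forall c, a <= c <= b -> is_derive f c (df c)) ->
  (forall c, a <= c <= b -> df c <= m) -> f b - f a <= m * (b - a).
Proof.
  intros Hab Hd Hm. destruct (Req_dec a b) as [->|Hne]; [lra|].
  destruct (mvt_open f df a b) as [c [Hc E]]; [lra|auto|].
  rewrite E. apply Rmult_le_compat_r; [lra|]. apply Hm; lra.
Qed.

Lemma is_derive_cont (f : R -> R) x l : is_derive f x l -> continuous f x.
Proof. intros H. apply (ex_derive_continuous (V:=R_NormedModule)). exists l; auto. Qed.

Lemma barrier (g dg : R -> R) a b Q eta : a <= b -> 0 < eta ->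
  (forall c, a <= c <= b -> is_derive g c (dg c)) ->
  g a <= Q ->
  (forall c, a <= c <= b -> Q < g c < Q + eta -> dg c <= 0) ->
  forall t, a <= t <= b -> g t <= Q.
Proof.
  intros Hab Heta Hd Ha Hdg t Ht.
  destruct (Rle_or_lt (g t) Q) as [|Hgt]; [auto|exfalso].
  set (E := fun s => a <= s <= t /\ g s <= Q).
  assert (Hb : bound E) by (exists t; intros s [Hs _]; lra).
  assert (He : exists x, E x) by (exists a; split; [lra|auto]).
  destruct (completeness E Hb He) as [m [Hub Hlub]].
  assert (Ham : a <= m) by (apply Hub; split; [lra|auto]).
  assert (Hmt : m <= t) by (apply Hlub; intros s [Hs _]; lra).
  assert (Hcm : continuous g m) by (apply (is_derive_cont g m (dg m)), Hd; lra).
  apply continuity_pt_filterlim in Hcm.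
  assert (Hgm : g m <= Q).
  { destruct (Rle_or_lt (g m) Q) as [|Hlt]; [auto|exfalso].
    destruct (proj1 (continuity_pt_locally g m) Hcm (mkposreal _ (proj2 (Rlt_0_minus _ _) Hlt))) as [d Hd'].
    assert (exists s, E s /\ m - d < s).
    { apply NNPP; intros Hn. assert (m <= m - d).
      { apply Hlub. intros s Hs. destruct (Rle_or_lt s (m - d)); auto. exfalso; apply Hn; exists s; auto. }
      destruct d; simpl in *; lra. }
    destruct H as [s [[Hs1 Hs2] Hs3]].
    assert (Hsm : s <= m) by (apply Hub; split; auto).
    assert (Habs : Rabs (g s - g m) < g m - Q).
    { apply Hd'. unfold ball; simpl; unfold AbsRing_ball, abs, minus, plus, opp; simpl.
      rewrite Rabs_left1; lra. }
    apply Rabs_def2 in Habs. lra. }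
  assert (Hmlt : m < t) by (destruct (Req_dec m t) as [->|]; [lra|lra]).
  destruct (proj1 (continuity_pt_locally g m) Hcm (mkposreal _ Heta)) as [d Hd'].
  set (s1 := Rmin (m + d / 2) t).
  assert (Hd0 := cond_pos d).
  assert (Hs1 : m < s1 <= t) by (unfold s1; apply Rmin_case_strong; intros; lra).
  assert (Hgs1 : Q < g s1).
  { destruct (Rle_or_lt (g s1) Q) as [H|H]; auto. assert (s1 <= m) by (apply Hub; split; [lra|auto]). lra. }
  destruct (mvt_open g dg m s1) as [c [Hc Ec]]; [lra| intros; apply Hd; lra|].
  assert (Hgc : Q < g c).
  { destruct (Rle_or_lt (g c) Q) as [H|H]; auto. assert (c <= m) by (apply Hub; split; [lra|auto]). lra. }
  assert (Hgc2 : g c < Q + eta).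
  { assert (Habs : Rabs (g c - g m) < eta).
    { apply Hd'. unfold ball; simpl; unfold AbsRing_ball, abs, minus, plus, opp; simpl.
      assert (s1 <= m + d/2) by (unfold s1; apply Rmin_l).
      rewrite Rabs_right; lra. }
    apply Rabs_def2 in Habs. lra. }
  assert (dg c <= 0) by (apply Hdg; [lra|lra]).
  assert (dg c * (s1 - m) <= 0) by (apply Rmult_le_0_r; lra). lra.
Qed.

Definition delta0 (m : nat) : R := match m with O => 1 | _ => 0 end.

Section Coef.
Variables (n : nat) (kap cb : R) (x0 : nat -> R).

Definition ssum (a : nat -> nat -> R) (p : nat) : R := sumn n (fun l => a l p).

Definition nextc (a : nat -> nat -> R) (m i : nat) : R :=
  if (i <? n)%nat then (- PS_mult (a i) (a i) m + kap * a n m - kap * cb * delta0 m) / INR (S m)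
  else - PS_mult (a n) (ssum a) m / INR (S m).

Fixpoint coefT (m : nat) : nat -> nat -> R :=
  match m with
  | O => fun i j => x0 i
  | S m' => fun i j => if (j <=? m')%nat then coefT m' i j else nextc (coefT m') m' i
  end.

Definition coef (i j : nat) : R := coefT j i j.

Lemma coefT_stab d j i : coefT (j + d) i j = coef i j.
Proof.
  induction d.
  - rewrite Nat.add_0_r. reflexivity.
  - rewrite Nat.add_succ_r. simpl. replace (j <=? j + d)%nat with true.
    + exact IHd.
    + symmetry; apply Nat.leb_le; lia.
Qed.

Lemma coefT_le m j i : (j <= m)%nat -> coefT m i j = coef i j.
Proof. intros H. replace m with (j + (m - j))%nat by lia. apply coefT_stab. Qed.

Lemma nextc_ext a b m i : (forall l j, (j <= m)%nat -> a l j = b l j) -> nextc a m i = nextc b m i.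
Proof.
  intros H. unfold nextc, PS_mult, ssum.
  rewrite (sum_eq (fun k => a i k * a i (m - k)%nat) (fun k => b i k * b i (m - k)%nat)).
  2:{ intros k Hk. rewrite !H by lia. reflexivity. }
  rewrite (sum_eq (fun k => a n k * sumn n (fun l => a l (m - k)%nat)) (fun k => b n k * sumn n (fun l => b l (m - k)%nat))).
  2:{ intros k Hk. rewrite H by lia. f_equal. apply sumn_ext. intros; apply H; lia. }
  rewrite H by lia. reflexivity.
Qed.

Lemma coef_0 i : coef i 0 = x0 i.
Proof. reflexivity. Qed.

Lemma coef_S i m : coef i (S m) = nextc coef m i.
Proof.
  change (coef i (S m)) with (if (S m <=? m)%nat then coefT m i (S m) else nextc (coefT m) m i).
  replace (S m <=? m)%nat with false.
  - apply nextc_ext. intros; apply coefT_le; auto.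
  - symmetry; apply Nat.leb_gt; lia.
Qed.

Lemma PS_mult_bound (a b : nat -> R) A B M m : 0 <= A -> 0 <= B -> 0 < M ->
  (forall k, (k <= m)%nat -> Rabs (a k) <= A * M ^ k) ->
  (forall k, (k <= m)%nat -> Rabs (b k) <= B * M ^ k) ->
  Rabs (PS_mult a b m) <= INR (S m) * (A * B * M ^ m).
Proof.
  intros HA HB HM Ha Hb. unfold PS_mult.
  eapply Rle_trans; [apply sum_f_R0_triangle|].
  rewrite <- (Rmult_comm (A * B * M ^ m)), <- sum_cte. apply sum_Rle. intros k Hk.
  rewrite Rabs_mult.
  replace (A * B * M ^ m) with ((A * M ^ k) * (B * M ^ (m - k))).
  - apply Rmult_le_compat; try apply Rabs_pos; [apply Ha; lia| apply Hb; lia].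
  - assert (E : M ^ m = M ^ k * M ^ (m - k)) by (rewrite <- pow_add; f_equal; lia).
    rewrite E; ring.
Qed.

Definition Mc (C : R) : R := C * (INR n + 1) + kap + kap * cb + 1.

Lemma coef_bound C : 1 <= C -> 0 <= kap -> 0 <= cb ->
  (forall i, (i <= n)%nat -> Rabs (x0 i) <= C) ->
  forall m j i, (j <= m)%nat -> (i <= n)%nat -> Rabs (coef i j) <= C * (Mc C) ^ j.
Proof.
  intros HC Hk Hc Hx. set (M := Mc C).
  assert (Hn0 : 0 <= INR n) by apply pos_INR.
  assert (HM1 : 1 <= M) by (unfold M, Mc; nra).
  assert (HM0 : 0 < M) by lra.
  induction m; intros j i Hj Hi.
  - assert (j = 0%nat) by lia. subst. rewrite coef_0. simpl. rewrite Rmult_1_r. auto.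
  - destruct (Nat.eq_dec j (S m)) as [->|Hne]; [|apply IHm; auto; lia].
    rewrite coef_S. unfold nextc.
    assert (HSm : 0 < INR (S m)) by (apply lt_0_INR; lia).
    assert (HMm : 1 <= M ^ m) by (apply pow_R1_Rle; lra).
    assert (Hbnd : forall l, (l <= n)%nat -> forall k, (k <= m)%nat -> Rabs (coef l k) <= C * M ^ k)
      by (intros; apply IHm; auto).
    destruct (i <? n)%nat eqn:Ein.
    + apply Nat.ltb_lt in Ein.
      assert (HP := PS_mult_bound (coef i) (coef i) C C M m ltac:(lra) ltac:(lra) HM0
                      (Hbnd i Hi) (Hbnd i Hi)).
      assert (Han := Hbnd n (le_n n) m (le_n m)).
      assert (Hd : 0 <= delta0 m <= 1) by (destruct m; simpl; lra).
      unfold Rdiv. rewrite Rabs_mult, Rabs_inv, (Rabs_right (INR (S m))) by lra.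
      apply (Rmult_le_reg_r (INR (S m))); [lra|].
      rewrite Rmult_assoc, Rinv_l by lra. rewrite Rmult_1_r.
      eapply Rle_trans; [apply Rabs_triang|].
      eapply Rle_trans; [apply Rplus_le_compat_r; apply Rabs_triang|].
      rewrite Rabs_Ropp, !Rabs_mult, Rabs_Ropp, !Rabs_mult, (Rabs_right kap), (Rabs_right cb),
        (Rabs_right (delta0 m)) by lra.
      assert (1 <= INR (S m)) by (rewrite S_INR; assert (0 <= INR m) by apply pos_INR; lra).
      simpl (M ^ S m).
      assert (kap * Rabs (coef n m) <= kap * (C * M ^ m)) by (apply Rmult_le_compat_l; lra).
      assert (kap * cb * delta0 m <= kap * cb * (C * M^m)) by (apply Rmult_le_compat_l; nra).
      assert (C * (C + kap + kap * cb) <= C * M) by (apply Rmult_le_compat_l; unfold M, Mc; nra).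
      assert (0 <= kap * cb) by (apply Rmult_le_pos; lra).
      assert (HX : 0 <= C * M ^ m) by nra.
      assert (HY : kap * (C * M ^ m) + kap * cb * (C * M ^ m) <= INR (S m) * (kap * (C * M ^ m) + kap * cb * (C * M ^ m))).
      { assert (0 <= kap * (C * M ^ m) + kap * cb * (C * M ^ m)) by (apply Rplus_le_le_0_compat; apply Rmult_le_pos; lra). nra. }
      assert (HZ : INR (S m) * (C * M ^ m * (C + kap + kap * cb)) <= INR (S m) * (C * M ^ m * M)).
      { apply Rmult_le_compat_l; [lra|]. nra. }
      nra.
    + assert (Hs : forall k, (k <= m)%nat -> Rabs (ssum coef k) <= (INR n * C) * M ^ k).
      { intros k Hk0. unfold ssum. eapply Rle_trans; [apply sumn_abs|].
        rewrite Rmult_assoc, <- sumn_const. apply sumn_le. intros l Hl. apply Hbnd; lia. }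
      assert (HP := PS_mult_bound (coef n) (ssum coef) C (INR n * C) M m ltac:(lra) ltac:(nra) HM0
                      (Hbnd n (le_n n)) Hs).
      unfold Rdiv. rewrite Rabs_mult, Rabs_inv, (Rabs_right (INR (S m))) by lra.
      apply (Rmult_le_reg_r (INR (S m))); [lra|].
      rewrite Rmult_assoc, Rinv_l by lra. rewrite Rmult_1_r, Rabs_Ropp.
      eapply Rle_trans; [exact HP|].
      simpl (M ^ S m).
      assert (INR n * C <= M) by (unfold M, Mc; nra).
      assert (0 <= C * M ^ m) by nra.
      assert (C * (INR n * C) * M ^ m <= C * (M * M ^ m)) by nra.
      rewrite (Rmult_comm _ (INR (S m))). apply Rmult_le_compat_l; lra.
Qed.

End Coef.

Lemma radius_bound (a : nat -> R) A M : 0 < M -> 0 <= A ->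
  (forall m, Rabs (a m) <= A * M ^ m) -> Rbar_le (/ M) (CV_radius a).
Proof.
  intros HM HA Ha. destruct (CV_radius_bounded a) as [Hub _]. apply Hub.
  exists A. intros m. rewrite Rabs_mult, <- RPow_abs, (Rabs_right (/ M)) by (left; apply Rinv_0_lt_compat; lra).
  rewrite pow_inv. apply (Rmult_le_reg_r (M ^ m)); [apply pow_lt; lra|].
  rewrite Rmult_assoc, Rinv_l by (apply pow_nonzero; lra). rewrite Rmult_1_r. apply Ha.
Qed.

Lemma inside_radius (a : nat -> R) M s : Rbar_le (/ M) (CV_radius a) -> Rabs s < / M ->
  Rbar_lt (Rabs s) (CV_radius a).
Proof. intros H1 H2. eapply Rbar_lt_le_trans; [|exact H1]. simpl. exact H2. Qed.

Lemma psum_bound (a : nat -> R) A M s : 0 < M -> 0 <= A ->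
  (forall m, Rabs (a m) <= A * M ^ m) -> Rabs s <= / (2 * M) ->
  Rabs (PSeries a s) <= 2 * A.
Proof.
  intros HM HA Ha Hs.
  assert (Hr := radius_bound a A M HM HA Ha).
  assert (Hs' : Rabs s < / M).
  { eapply Rle_lt_trans; [exact Hs|]. apply Rinv_lt_contravar; nra. }
  assert (Hq : 0 <= M * Rabs s <= / 2).
  { split; [apply Rmult_le_pos; [lra|apply Rabs_pos]|].
    apply (Rmult_le_compat_l M) in Hs; [|lra]. rewrite Rinv_mult in Hs.
    replace (M * (/ 2 * / M)) with (/2) in Hs by (field; lra). exact Hs. }
  assert (Hgeo : is_series (fun m => A * (M * Rabs s) ^ m) (A * / (1 - M * Rabs s))).
  { apply (is_series_scal_l A (fun m => (M * Rabs s) ^ m)). apply is_series_geom.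
    rewrite Rabs_right; lra. }
  unfold PSeries. eapply Rle_trans; [apply Series_Rabs; apply CV_disk_inside, (inside_radius _ M); auto|].
  eapply Rle_trans.
  - apply (Series_le _ (fun m => A * (M * Rabs s) ^ m)).
    + intros m. split; [apply Rabs_pos|]. rewrite Rabs_mult, <- RPow_abs, Rpow_mult_distr.
      rewrite <- Rmult_assoc. apply Rmult_le_compat_r; [apply pow_le, Rabs_pos|]. apply Ha.
    + eexists; exact Hgeo.
  - rewrite (is_series_unique _ _ Hgeo).
    assert (/ (1 - M * Rabs s) <= 2).
    { replace 2 with (/ / 2) by (field). apply Rinv_le_contravar; lra. }
    apply Rmult_le_compat_l with (r := A) in H; [|lra]. lra.
Qed.

Lemma PSeries_delta0 s : PSeries delta0 s = 1.
Proof.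
  assert (Hr : Rbar_le (/ / (Rabs s + 1)) (CV_radius delta0)).
  { apply (radius_bound _ 1). - apply Rinv_0_lt_compat. pose proof (Rabs_pos s); lra. - lra.
    - intros m. destruct m; simpl. + rewrite Rabs_R1; lra.
      + rewrite Rabs_R0, Rmult_1_l. left. change (0 < (/ (Rabs s + 1)) ^ (S m)). apply pow_lt. apply Rinv_0_lt_compat. pose proof (Rabs_pos s); lra. }
  rewrite Rinv_inv in Hr.
  assert (Hin : Rbar_lt (Rabs s) (CV_radius delta0)) by (eapply Rbar_lt_le_trans; [|exact Hr]; simpl; lra).
  rewrite PSeries_decr_1 by (apply CV_radius_inside; auto).
  rewrite (PSeries_ext _ (PS_scal 0 (fun _ => 0))).
  - rewrite PSeries_scal. simpl. ring.
  - intros m. unfold PS_decr_1, PS_scal, scal; simpl. unfold mult; simpl. ring.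
Qed.

Section Sol.
Variables (n : nat) (kap cb C : R) (x0 : nat -> R).
Hypotheses (HC : 1 <= C) (Hkap : 0 <= kap) (Hcb : 0 <= cb)
  (Hx0 : forall i, (i <= n)%nat -> Rabs (x0 i) <= C).

Let a := coef n kap cb x0.
Let M := Mc n kap cb C.
Definition ysol (i : nat) (s : R) : R := PSeries (coef n kap cb x0 i) s.

Lemma M_pos : 0 < M.
Proof. unfold M, Mc. assert (0 <= INR n) by apply pos_INR. assert (0 <= kap * cb) by (apply Rmult_le_pos; lra). nra. Qed.

Lemma a_bound i m : (i <= n)%nat -> Rabs (a i m) <= C * M ^ m.
Proof. intros Hi. apply (coef_bound n kap cb x0 C HC Hkap Hcb Hx0 m m i); auto. Qed.

Lemma a_radius i : (i <= n)%nat -> Rbar_le (/ M) (CV_radius (a i)).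
Proof. intros Hi. apply (radius_bound _ C); [apply M_pos|lra|]. intros; apply a_bound; auto. Qed.

Lemma ssum_bound m : Rabs (ssum n a m) <= (INR n * C) * M ^ m.
Proof.
  unfold ssum. eapply Rle_trans; [apply sumn_abs|].
  rewrite Rmult_assoc, <- sumn_const. apply sumn_le. intros l Hl. apply a_bound; lia.
Qed.

Lemma ssum_radius : Rbar_le (/ M) (CV_radius (ssum n a)).
Proof.
  apply (radius_bound _ (INR n * C)); [apply M_pos| |apply ssum_bound].
  apply Rmult_le_pos; [apply pos_INR|lra].
Qed.

Lemma ysol_0 i : ysol i 0 = x0 i.
Proof. unfold ysol. rewrite PSeries_0. reflexivity. Qed.

Lemma ysol_bound i s : (i <= n)%nat -> Rabs s <= / (2 * M) -> Rabs (ysol i s) <= 2 * C.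
Proof. intros Hi Hs. apply (psum_bound _ C M); auto; [apply M_pos|lra|intros; apply a_bound; auto]. Qed.

Lemma is_pseries_ssum s : Rabs s < / M ->
  forall n', (n' <= n)%nat ->
  is_pseries (fun p => sumn n' (fun l => a l p)) s (sumn n' (fun l => ysol l s)).
Proof.
  intros Hs n'. induction n'; intros Hn'.
  - rewrite sumn_0.
    assert (E : PSeries (fun _ => 0) s = 0).
    { rewrite (PSeries_ext _ (PS_scal 0 (fun _ => 0))). rewrite PSeries_scal. ring.
      intros; unfold PS_scal, scal; simpl; unfold mult; simpl; ring. }
    assert (Hp : is_pseries (fun _ => 0) s (PSeries (fun _ => 0) s)).
    { apply PSeries_correct. apply CV_radius_inside. rewrite CV_radius_const_0. simpl; auto. }
    rewrite E in Hp. apply (is_pseries_ext (fun _ => 0)); [|exact Hp].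
    intros m. rewrite sumn_0. reflexivity.
  - rewrite sumn_S. apply (is_pseries_ext (PS_plus (fun p => sumn n' (fun l => a l p)) (a n'))).
    + intros m. unfold PS_plus, plus; simpl. rewrite sumn_S. reflexivity.
    + apply (is_pseries_plus _ _ s (sumn n' (fun l => ysol l s)) (ysol n' s)).
      * apply IHn'; lia.
      * apply PSeries_correct, CV_radius_inside, (inside_radius _ M); auto. apply a_radius; lia.
Qed.

Lemma ps_corr i s : (i <= n)%nat -> Rabs s < / M -> is_pseries (a i) s (ysol i s).
Proof. intros Hi Hs. apply PSeries_correct, CV_radius_inside, (inside_radius _ M); auto. apply a_radius; auto. Qed.

Lemma ysol_deriv_lam i s : (i < n)%nat -> Rabs s < / M ->
  is_derive (ysol i) s (- (ysol i s) ^ 2 + kap * (ysol n s - cb)).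
Proof.
  intros Hi Hs.
  assert (Hri : Rbar_lt (Rabs s) (CV_radius (a i))) by (apply (inside_radius _ M); auto; apply a_radius; lia).
  assert (Hrn : Rbar_lt (Rabs s) (CV_radius (a n))) by (apply (inside_radius _ M); auto; apply a_radius; lia).
  replace (- (ysol i s) ^ 2 + kap * (ysol n s - cb)) with (PSeries (PS_derive (a i)) s).
  { apply is_derive_PSeries; auto. }
  assert (H1 := is_pseries_mult (a i) (a i) s _ _ (ps_corr i s ltac:(lia) Hs) (ps_corr i s ltac:(lia) Hs) Hri Hri).
  assert (H2 := ps_corr n s (le_n n) Hs).
  assert (H3 : is_pseries delta0 s 1).
  { rewrite <- (PSeries_delta0 s). apply PSeries_correct. apply CV_radius_inside.
    eapply Rbar_lt_le_trans; [|apply (radius_bound _ 1 (/ (Rabs s + 1)))].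
    - rewrite Rinv_inv. simpl; lra.
    - apply Rinv_0_lt_compat. pose proof (Rabs_pos s); lra.
    - lra.
    - intros m. destruct m; simpl. + rewrite Rabs_R1; lra.
      + rewrite Rabs_R0, Rmult_1_l. left. change (0 < (/ (Rabs s + 1)) ^ (S m)). apply pow_lt. apply Rinv_0_lt_compat. pose proof (Rabs_pos s); lra. }
  assert (Hcomm : forall c, mult s c = mult c s) by (intros; unfold mult; simpl; ring).
  assert (H := is_pseries_plus _ _ s _ _
     (is_pseries_plus _ _ s _ _ (is_pseries_scal (-1) _ s _ (Hcomm _) H1) (is_pseries_scal kap _ s _ (Hcomm _) H2))
     (is_pseries_scal (- (kap * cb)) _ s _ (Hcomm _) H3)).
  apply is_pseries_unique in H.
  rewrite (PSeries_ext _ (PS_derive (a i))) in H.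
  - rewrite H. unfold plus, scal; simpl; unfold mult; simpl. ring.
  - intros m. unfold PS_derive.
    unfold a. rewrite coef_S. unfold nextc. replace (i <? n)%nat with true by (symmetry; apply Nat.ltb_lt; auto).
    assert (Hq : INR (S m) <> 0) by (apply not_0_INR; lia).
    set (q := INR (S m)) in *. unfold PS_plus, PS_scal, plus, scal; simpl; unfold mult; simpl.
    field. auto.
Qed.

Lemma ysol_deriv_rho s : Rabs s < / M ->
  is_derive (ysol n) s (- ysol n s * sumn n (fun l => ysol l s)).
Proof.
  intros Hs.
  assert (Hrn : Rbar_lt (Rabs s) (CV_radius (a n))) by (apply (inside_radius _ M); auto; apply a_radius; lia).
  assert (Hrs : Rbar_lt (Rabs s) (CV_radius (ssum n a))) by (apply (inside_radius _ M); auto; apply ssum_radius).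
  replace (- ysol n s * sumn n (fun l => ysol l s)) with (PSeries (PS_derive (a n)) s).
  { apply is_derive_PSeries; auto. }
  assert (H1 := is_pseries_mult (a n) (ssum n a) s _ _ (ps_corr n s (le_n n) Hs) (is_pseries_ssum s Hs n (le_n n)) Hrn Hrs).
  assert (Hcomm : forall c, mult s c = mult c s) by (intros; unfold mult; simpl; ring).
  assert (H := is_pseries_scal (-1) _ s _ (Hcomm _) H1).
  apply is_pseries_unique in H.
  rewrite (PSeries_ext _ (PS_derive (a n))) in H.
  - rewrite H. unfold scal; simpl; unfold mult; simpl. ring.
  - intros m. unfold PS_derive.
    unfold a. rewrite coef_S. unfold nextc. replace (n <? n)%nat with false by (symmetry; apply Nat.ltb_ge; auto).
    assert (Hq : INR (S m) <> 0) by (apply not_0_INR; lia).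
    set (q := INR (S m)) in *. unfold PS_scal, scal; simpl; unfold mult; simpl.
    field. auto.
Qed.

End Sol.

Definition Fv (n : nat) (kap cb : R) (z : nat -> R -> R) (i : nat) (t : R) : R :=
  if (i <? n)%nat then - (z i t) ^ 2 + kap * (z n t - cb)
  else - z n t * sumn n (fun l => z l t).

Definition ODEat (n : nat) (kap cb : R) (z : nat -> R -> R) (t : R) : Prop :=
  (forall i, (i < n)%nat -> is_derive (z i) t (- (z i t) ^ 2 + kap * (z n t - cb))) /\
  is_derive (z n) t (- z n t * sumn n (fun l => z l t)).

Lemma ODEat_F n kap cb z t : ODEat n kap cb z t ->
  forall i, (i <= n)%nat -> is_derive (z i) t (Fv n kap cb z i t).
Proof.
  intros [H1 H2] i Hi. unfold Fv. destruct (i <? n)%nat eqn:E.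
  - apply Nat.ltb_lt in E. auto.
  - apply Nat.ltb_ge in E. assert (i = n) by lia. subst. auto.
Qed.

Lemma is_derive_expL (L t : R) : is_derive (fun s => exp (- L * s)) t (- L * exp (- L * t)).
Proof. auto_derive; [auto|ring]. Qed.

Lemma uniq_ode n kap cb (x y : nat -> R -> R) a b K : 0 <= kap -> a <= b -> 0 <= K ->
  (forall t, a <= t <= b -> ODEat n kap cb x t /\ ODEat n kap cb y t) ->
  (forall t, a <= t <= b -> forall i, (i <= n)%nat -> Rabs (x i t) <= K /\ Rabs (y i t) <= K) ->
  (forall i, (i <= n)%nat -> x i a = y i a) ->
  forall i, (i <= n)%nat -> x i b = y i b.
Proof.
  intros Hk Hab HK Hode Hb Ha.
  set (e := fun i t => x i t - y i t).
  set (d := fun t => sumn (S n) (fun i => (e i t) ^ 2)).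
  set (dd := fun t => sumn (S n) (fun i => 2 * e i t * (Fv n kap cb x i t - Fv n kap cb y i t))).
  set (L := 5 * K + kap + INR n * kap + 3 * INR n * K).
  assert (Hn0 : 0 <= INR n) by apply pos_INR.
  assert (Hd : forall t, a <= t <= b -> is_derive d t (dd t)).
  { intros t Ht. apply is_derive_sumn. intros i Hi.
    destruct (Hode t Ht) as [Ox Oy].
    assert (Hx := ODEat_F _ _ _ _ _ Ox i ltac:(lia)). assert (Hy := ODEat_F _ _ _ _ _ Oy i ltac:(lia)).
    assert (He : is_derive (e i) t (Fv n kap cb x i t - Fv n kap cb y i t)).
    { apply (is_derive_minus (x i) (y i)); auto. }
    eapply is_derive_ext; [intros; reflexivity|].
    replace (2 * e i t * (Fv n kap cb x i t - Fv n kap cb y i t))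
      with (INR 2 * (Fv n kap cb x i t - Fv n kap cb y i t) * e i t ^ Init.Nat.pred 2) by (simpl; ring).
    apply (is_derive_pow (e i) 2 t). auto. }
  assert (Hineq : forall t, a <= t <= b -> dd t <= L * d t).
  { intros t Ht. unfold dd, d. rewrite !sumn_S.
    assert (Hxb := Hb t Ht).
    set (E := sumn n (fun i => e i t ^ 2)).
    assert (HE : 0 <= E) by (apply sumn_nonneg; intros; apply pow2_ge_0).
    assert (Hen := Hxb n (le_n n)).
    assert (S1 : sumn n (fun i => 2 * e i t * (Fv n kap cb x i t - Fv n kap cb y i t))
                 <= (4 * K + kap) * E + INR n * (kap * e n t ^ 2)).
    { unfold E. rewrite <- sumn_scal, <- sumn_const, <- sumn_plus. apply sumn_le. intros i Hi.
      unfold Fv. replace (i <? n)%nat with true by (symmetry; apply Nat.ltb_lt; auto).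
      destruct (Hxb i ltac:(lia)) as [Hxi Hyi].
      unfold e. set (xi := x i t) in *. set (yi := y i t) in *. set (xn := x n t) in *. set (yn := y n t) in *.
      assert (H1 : - 2 * (xi + yi) * (xi - yi) ^ 2 <= 4 * K * (xi - yi) ^ 2).
      { assert (0 <= (xi - yi) ^ 2) by apply pow2_ge_0.
        assert (- (xi + yi) <= 2 * K) by (apply Rabs_le_between in Hxi; apply Rabs_le_between in Hyi; lra).
        assert (0 <= (2 * K + (xi + yi)) * (xi - yi) ^ 2) by (apply Rmult_le_pos; lra).
        nra. }
      assert (H2 : 2 * kap * (xi - yi) * (xn - yn) <= kap * ((xi - yi) ^ 2 + (xn - yn) ^ 2)).
      { assert (0 <= ((xi - yi) - (xn - yn)) ^ 2) by apply pow2_ge_0. nra. }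
      replace (2 * (xi - yi) * (- xi ^ 2 + kap * (xn - cb) - (- yi ^ 2 + kap * (yn - cb))))
        with (- 2 * (xi + yi) * (xi - yi) ^ 2 + 2 * kap * (xi - yi) * (xn - yn)) by ring.
      lra. }
    assert (S2 : 2 * e n t * (Fv n kap cb x n t - Fv n kap cb y n t) <= 3 * INR n * K * e n t ^ 2 + K * E).
    { unfold Fv. replace (n <? n)%nat with false by (symmetry; apply Nat.ltb_ge; auto).
      set (Sx := sumn n (fun l => x l t)). set (Sy := sumn n (fun l => y l t)).
      assert (HSx : Rabs Sx <= INR n * K).
      { unfold Sx. eapply Rle_trans; [apply sumn_abs|]. rewrite <- sumn_const. apply sumn_le.
        intros l Hl. apply Hxb; lia. }
      assert (HSd : Sx - Sy = sumn n (fun l => e l t)).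
      { rewrite (sumn_ext n (fun l => e l t) (fun l => x l t + (-1) * y l t)) by (intros; unfold e; ring).
        rewrite sumn_plus, sumn_scal. unfold Sx, Sy. ring. }
      replace (2 * e n t * (- x n t * Sx - - y n t * Sy))
        with (- 2 * e n t ^ 2 * Sx + (- 2 * y n t * e n t) * (Sx - Sy)) by (unfold e; ring).
      rewrite HSd, <- sumn_scal.
      assert (T1 : - 2 * e n t ^ 2 * Sx <= 2 * INR n * K * e n t ^ 2).
      { apply Rabs_le_between in HSx. assert (0 <= e n t ^ 2) by apply pow2_ge_0. nra. }
      assert (T2 : sumn n (fun l => - 2 * y n t * e n t * e l t) <= sumn n (fun l => K * e n t ^ 2 + K * e l t ^ 2)).
      { apply sumn_le. intros l Hl. destruct Hen as [_ Hyn].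
        assert (Hyn' := Hyn). apply Rabs_le_between in Hyn'.
        assert (2 * Rabs (e n t * e l t) <= e n t ^ 2 + e l t ^ 2).
        { rewrite Rabs_mult. assert (0 <= (Rabs (e n t) - Rabs (e l t)) ^ 2) by apply pow2_ge_0.
          assert (Rabs (e n t) ^ 2 = e n t ^ 2) by apply pow2_abs.
          assert (Rabs (e l t) ^ 2 = e l t ^ 2) by apply pow2_abs.
          nra. }
        assert (- 2 * y n t * e n t * e l t <= 2 * K * Rabs (e n t * e l t)).
        { assert (Hq : - (y n t * (e n t * e l t)) <= Rabs (y n t) * Rabs (e n t * e l t))
            by (rewrite <- Rabs_mult, <- Rabs_Ropp; apply Rle_abs).
          assert (0 <= Rabs (e n t * e l t)) by apply Rabs_pos.
          assert (Rabs (y n t) * Rabs (e n t * e l t) <= K * Rabs (e n t * e l t)) by (apply Rmult_le_compat_r; lra).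
          nra. }
        assert (0 <= K * (e n t ^ 2 + e l t ^ 2 - 2 * Rabs (e n t * e l t))) by (apply Rmult_le_pos; lra).
        nra. }
      rewrite sumn_plus, sumn_const, (sumn_scal n K (fun i => e i t ^ 2)) in T2. fold E in T2.
      lra. }
    assert (0 <= e n t ^ 2) by apply pow2_ge_0.
    assert (0 <= (INR n * kap + 3 * INR n * K) * E) by (apply Rmult_le_pos; [|lra]; assert (0 <= INR n * kap) by (apply Rmult_le_pos; lra); assert (0 <= INR n * K) by (apply Rmult_le_pos; lra); lra).
    assert (0 <= (5 * K + kap) * e n t ^ 2) by (apply Rmult_le_pos; lra).
    unfold L. nra. }
  set (h := fun t => d t * exp (- L * t)).
  assert (Hh : forall t, a <= t <= b -> is_derive h t ((dd t - L * d t) * exp (- L * t))).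
  { intros t Ht. unfold h.
    eapply is_derive_ext; [intros; reflexivity|].
    replace ((dd t - L * d t) * exp (- L * t)) with (plus (mult (dd t) (exp (- L * t))) (mult (d t) (- L * exp (- L * t))))
      by (unfold plus, mult; simpl; ring).
    apply (is_derive_mult d (fun s => exp (- L * s))); [auto|apply is_derive_expL|].
    intros; unfold mult; simpl; ring. }
  assert (Hhb : h b - h a <= 0 * (b - a)).
  { apply (deriv_ub h (fun t => (dd t - L * d t) * exp (- L * t))); auto.
    intros c Hc. assert (dd c <= L * d c) by auto. assert (0 < exp (- L * c)) by apply exp_pos. nra. }
  assert (Hda : d a = 0).
  { unfold d. rewrite <- (Rmult_0_r (INR (S n))), <- sumn_const. apply sumn_ext. intros i Hi.
    unfold e. rewrite Ha by lia. ring. }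
  assert (Hdb : d b <= 0).
  { unfold h in Hhb. rewrite Hda in Hhb. assert (0 < exp (- L * b)) by apply exp_pos. nra. }
  intros i Hi.
  assert (e i b ^ 2 <= d b).
  { unfold d. apply (sumn_term_le (S n) (fun i => e i b ^ 2)); [intros; apply pow2_ge_0|lia]. }
  assert (e i b = 0).
  { assert (0 <= e i b ^ 2) by apply pow2_ge_0. assert (e i b ^ 2 = 0) by lra.
    apply (pow_eq_zero_depr _ 2) || nra. }
  unfold e in H0. lra.
Qed.

Lemma is_derive_eq (f : R -> R) (t l1 l2 : R) : is_derive f t l1 -> l1 = l2 -> is_derive f t l2.
Proof. intros H ->; auto. Qed.

Lemma is_derive_mult' (f g : R -> R) t df dg : is_derive f t df -> is_derive g t dg ->
  is_derive (fun s => f s * g s) t (df * g t + f t * dg).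
Proof.
  intros Hf Hg. apply (is_derive_mult f g t df dg Hf Hg). intros; unfold mult; simpl; ring.
Qed.

Lemma is_derive_exp_comp (U : R -> R) t dU : is_derive U t dU ->
  is_derive (fun s => exp (U s)) t (dU * exp (U t)).
Proof.
  intros H. apply (is_derive_comp exp U t (exp (U t)) dU); [apply is_derive_exp|auto].
Qed.

Section Core.
Variables (l r U : R -> R) (ta tB D kap cb : R).
Hypotheses (Hta : ta < tB) (HD : 0 <= D) (HDk : D = kap * cb) (Hkap : 0 <= kap)
  (Hsmall_int : D * (tB - ta) ^ 2 <= / 4)
  (HU : forall t, ta <= t < tB -> is_derive U t (l t))
  (Hl : forall t, ta <= t < tB -> is_derive l t (- (l t) ^ 2 + kap * (r t - cb)))
  (Hr : forall t, ta <= t < tB -> 0 <= r t)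
  (Hsmall : forall c t', ta <= t' < tB -> exists s, t' <= s < tB /\ U s < c).

Let u t := exp (U t).
Let phi t := 1 - D * (t - ta) ^ 2.
Let W t := u t * (l t * phi t + 2 * D * (t - ta)).
Let v t := u t / phi t.

Lemma phi_bounds t : ta <= t <= tB -> 3 / 4 <= phi t <= 1.
Proof.
  intros Ht. unfold phi. assert (0 <= (t - ta) ^ 2) by apply pow2_ge_0.
  assert ((t - ta) ^ 2 <= (tB - ta) ^ 2) by (apply pow_incr; lra).
  assert (D * (t - ta) ^ 2 <= D * (tB - ta) ^ 2) by (apply Rmult_le_compat_l; lra).
  assert (0 <= D * (t - ta) ^ 2) by (apply Rmult_le_pos; lra). lra.
Qed.

Lemma u_pos t : 0 < u t.
Proof. apply exp_pos. Qed.

Lemma W_deriv t : ta <= t < tB -> is_derive W t (u t * (kap * (r t - cb) * phi t + 2 * D)).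
Proof.
  intros Ht. unfold W.
  assert (Hu : is_derive u t (l t * u t)) by (apply is_derive_exp_comp; auto).
  assert (Hphi : is_derive phi t (- 2 * D * (t - ta))) by (unfold phi; auto_derive; [auto|ring]).
  assert (Hg : is_derive (fun s => l s * phi s + 2 * D * (s - ta)) t
                 ((- (l t) ^ 2 + kap * (r t - cb)) * phi t + l t * (- 2 * D * (t - ta)) + 2 * D)).
  { apply (is_derive_plus (fun s => l s * phi s) (fun s => 2 * D * (s - ta))).
    - apply is_derive_mult'; auto.
    - auto_derive; [auto|ring]. }
  eapply is_derive_eq; [apply is_derive_mult'; [exact Hu|exact Hg]|]. cbv beta. ring.
Qed.

Lemma W_deriv_nonneg t : ta <= t < tB -> 0 <= u t * (kap * (r t - cb) * phi t + 2 * D).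
Proof.
  intros Ht. apply Rmult_le_pos; [left; apply u_pos|].
  assert (Hp := phi_bounds t ltac:(lra)). assert (Hrt := Hr t Ht).
  assert (kap * (r t - cb) * phi t >= - D * phi t).
  { rewrite HDk. assert (kap * r t * phi t >= 0) by (apply Rle_ge, Rmult_le_pos; [apply Rmult_le_pos|]; lra). nra. }
  nra.
Qed.

Lemma W_incr a b : ta <= a <= b -> b < tB -> W a <= W b.
Proof.
  intros Hab Hb. assert (H := deriv_lb W (fun t => u t * (kap * (r t - cb) * phi t + 2 * D)) a b 0 ltac:(lra)).
  assert (0 * (b - a) <= W b - W a); [|lra]. apply H.
  - intros c Hc. apply W_deriv; lra.
  - intros c Hc. apply W_deriv_nonneg; lra.
Qed.

Lemma v_deriv t : ta <= t < tB -> is_derive v t (W t / (phi t) ^ 2).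
Proof.
  intros Ht. unfold v.
  assert (Hu : is_derive u t (l t * u t)) by (apply is_derive_exp_comp; auto).
  assert (Hphi : is_derive phi t (- 2 * D * (t - ta))) by (unfold phi; auto_derive; [auto|ring]).
  assert (Hp := phi_bounds t ltac:(lra)).
  eapply is_derive_eq; [apply (is_derive_div u phi); eauto; lra|].
  unfold W. field. lra.
Qed.

Let K0 := Rabs (W ta) * (16 / 9).

Lemma v_deriv_lb t : ta <= t < tB -> - K0 <= W t / (phi t) ^ 2.
Proof.
  intros Ht. assert (Hp := phi_bounds t ltac:(lra)).
  assert (HW : W ta <= W t) by (apply W_incr; lra).
  assert (H1 : - Rabs (W ta) <= W t) by (pose proof (Rle_abs (- W ta)); rewrite Rabs_Ropp in H; lra).
  assert (Hp2 : 9 / 16 <= phi t ^ 2 <= 1) by (split; nra).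
  unfold K0. apply (Rmult_le_reg_r (phi t ^ 2)); [lra|].
  unfold Rdiv. rewrite Rmult_assoc, Rinv_l, Rmult_1_r by lra.
  assert (0 <= Rabs (W ta)) by apply Rabs_pos. nra.
Qed.

Lemma step1 t s : ta <= t <= s -> s < tB -> v t <= v s + K0 * (s - t).
Proof.
  intros Hts Hs. assert (H := deriv_lb v (fun t => W t / (phi t) ^ 2) t s (- K0) ltac:(lra)).
  assert (- K0 * (s - t) <= v s - v t); [|lra]. apply H.
  - intros c Hc. apply v_deriv; lra.
  - intros c Hc. apply v_deriv_lb; lra.
Qed.

Lemma v_pos t : ta <= t <= tB -> 0 < v t.
Proof. intros Ht. unfold v. assert (Hp := phi_bounds t Ht). apply Rdiv_lt_0_compat; [apply u_pos|lra]. Qed.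

Lemma step2 eps : 0 < eps -> exists t', ta <= t' < tB /\ forall t, t' <= t < tB -> v t < eps.
Proof.
  intros He. assert (HK : 0 <= K0) by (unfold K0; assert (0 <= Rabs (W ta)) by apply Rabs_pos; lra).
  set (t' := Rmax ta (tB - eps / (2 * (K0 + 1)))).
  assert (Hq : 0 < eps / (2 * (K0 + 1))) by (apply Rdiv_lt_0_compat; lra).
  exists t'. split; [unfold t'; split; [apply Rmax_l|apply Rmax_lub_lt; lra]|].
  intros t Ht.
  assert (Hta' : ta <= t) by (pose proof (Rmax_l ta (tB - eps / (2 * (K0 + 1)))); unfold t' in Ht; lra).
  assert (Htb : tB - eps / (2 * (K0 + 1)) <= t) by (pose proof (Rmax_r ta (tB - eps / (2 * (K0 + 1)))); unfold t' in Ht; lra).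
  destruct (Hsmall (ln (3 * eps / 8)) t ltac:(lra)) as [s [Hs Hus]].
  assert (Hus' : u s < 3 * eps / 8).
  { unfold u. rewrite <- (exp_ln (3 * eps / 8)) by lra. apply exp_increasing. auto. }
  assert (Hvs : v s < eps / 2).
  { unfold v. assert (Hp := phi_bounds s ltac:(lra)). apply (Rmult_lt_reg_r (phi s)); [lra|].
    unfold Rdiv at 1. rewrite Rmult_assoc, Rinv_l, Rmult_1_r by lra. assert (0 < u s) by apply u_pos. nra. }
  assert (H1 := step1 t s ltac:(lra) ltac:(lra)).
  assert (K0 * (s - t) <= K0 * (eps / (2 * (K0 + 1)))) by (apply Rmult_le_compat_l; lra).
  assert (K0 * (eps / (2 * (K0 + 1))) < eps / 2).
  { unfold Rdiv. rewrite Rinv_mult.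
    replace (K0 * (eps * (/ 2 * / (K0 + 1)))) with (eps / 2 * (K0 / (K0 + 1))) by (field; lra).
    assert (K0 / (K0 + 1) < 1) by (apply (Rmult_lt_reg_r (K0 + 1)); [lra|]; unfold Rdiv; rewrite Rmult_assoc, Rinv_l by lra; lra).
    nra. }
  lra.
Qed.

Lemma step3 t : ta <= t < tB -> W t <= 0.
Proof.
  intros Ht. destruct (Rle_or_lt (W t) 0) as [|HW]; [auto|exfalso].
  assert (Hvt := v_pos t ltac:(lra)).
  destruct (step2 (v t) Hvt) as [t' [Ht' Hv]].
  set (s := Rmax t' t).
  assert (Hs : t <= s < tB) by (unfold s; split; [apply Rmax_r|apply Rmax_lub_lt; lra]).
  assert (v t <= v s).
  { assert (H := deriv_lb v (fun t => W t / (phi t) ^ 2) t s 0 ltac:(lra)).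
    assert (0 * (s - t) <= v s - v t); [|lra]. apply H.
    - intros c Hc. apply v_deriv; lra.
    - intros c Hc. assert (Hp := phi_bounds c ltac:(lra)). assert (W t <= W c) by (apply W_incr; lra).
      unfold Rdiv; apply Rmult_le_pos; [lra|left; apply Rinv_0_lt_compat; nra].
  }
  assert (v s < v t) by (apply Hv; split; [unfold s; apply Rmax_l|lra]). lra.
Qed.

Lemma step4 t : ta <= t < tB -> v t <= (- W t) * (16 / 9) * (tB - t).
Proof.
  intros Ht. apply Rnot_lt_le. intros Hlt.
  set (X := (- W t) * (16 / 9) * (tB - t)).
  assert (He : 0 < (v t - X) / 2) by (unfold X in *; lra).
  destruct (step2 _ He) as [t' [Ht' Hv]].
  set (s := Rmax t' t).
  assert (Hs : t <= s < tB) by (unfold s; split; [apply Rmax_r|apply Rmax_lub_lt; lra]).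
  assert (HWt := step3 t Ht).
  assert (W t * (16 / 9) * (s - t) <= v s - v t).
  { apply (deriv_lb v (fun t => W t / (phi t) ^ 2) t s); [lra| |].
    - intros c Hc. apply v_deriv; lra.
    - intros c Hc. assert (Hp := phi_bounds c ltac:(lra)). assert (W t <= W c) by (apply W_incr; lra).
      assert (Hp2 : 9 / 16 <= phi c ^ 2 <= 1) by (split; nra).
      assert (Hi : / phi c ^ 2 <= 16 / 9).
      { replace (16 / 9) with (/ (9 / 16)) by field. apply Rinv_le_contravar; lra. }
      assert (Hi0 : 0 < / phi c ^ 2) by (apply Rinv_0_lt_compat; lra).
      unfold Rdiv. assert (W t * / phi c ^ 2 <= W c * / phi c ^ 2) by (apply Rmult_le_compat_r; lra).
      assert (W t * (16 * / 9) <= W t * / phi c ^ 2) by (apply Rmult_le_compat_neg_l; lra). lra. }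
  assert (v s < (v t - X) / 2) by (apply Hv; split; [unfold s; apply Rmax_l|lra]).
  assert (0 <= - W t * (16 / 9) * (tB - s)) by (apply Rmult_le_pos; [|lra]; lra).
  unfold X in *. nra.
Qed.

Lemma core_bound t : ta <= t < tB -> l t <= - (9 / 16) / (tB - t).
Proof.
  intros Ht. assert (H4 := step4 t Ht). assert (Hv := v_pos t ltac:(lra)).
  assert (Hp := phi_bounds t ltac:(lra)). assert (Hu := u_pos t).
  assert (HWneg : W t < 0).
  { destruct (Rle_or_lt 0 (W t)) as [H|H]; [|auto]. assert ((- W t) * (16 / 9) * (tB - t) <= 0) by (apply Rmult_le_0_r; nra). lra. }
  assert (Hl_eq : l t = W t / (u t * phi t) - 2 * D * (t - ta) / phi t).
  { unfold W. field. split; lra. }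
  assert (Hsec : 0 <= 2 * D * (t - ta) / phi t).
  { unfold Rdiv; apply Rmult_le_pos; [|left; apply Rinv_0_lt_compat; lra]. apply Rmult_le_pos; lra. }
  assert (Huphi : u t * phi t = v t * phi t ^ 2) by (unfold v; field; lra).
  assert (Hbound : u t * phi t <= (- W t) * (16 / 9) * (tB - t)).
  { rewrite Huphi. assert (0 < phi t ^ 2 <= 1) by (split; nra).
    assert (0 <= (- W t) * (16 / 9) * (tB - t)) by lra. nra. }
  assert (Hfirst : W t / (u t * phi t) <= W t / ((- W t) * (16 / 9) * (tB - t))).
  { unfold Rdiv. apply Rmult_le_compat_neg_l; [lra|]. apply Rinv_le_contravar; [nra|auto]. }
  replace (W t / (- W t * (16 / 9) * (tB - t))) with (- (9 / 16) / (tB - t)) in Hfirst by (field; lra).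
  lra.
Qed.

End Core.

Lemma blowup_filterlim (l : R -> R) ta tB : ta < tB ->
  (forall t, ta <= t < tB -> l t <= - (9 / 16) / (tB - t)) ->
  filterlim (fun t => Rabs (l t)) (at_left tB) (Rbar_locally p_infty).
Proof.
  intros Hta Hb P [M HM].
  set (d := Rmin (tB - ta) ((9 / 16) / (Rabs M + 1))).
  assert (Hd : 0 < d) by (unfold d; apply Rmin_pos; [lra|apply Rdiv_lt_0_compat; [lra|pose proof (Rabs_pos M); lra]]).
  exists (mkposreal d Hd). intros y Hy Hyt. apply HM.
  unfold ball in Hy; simpl in Hy; unfold AbsRing_ball, abs, minus, plus, opp in Hy; simpl in Hy.
  rewrite Rabs_left1 in Hy by lra.
  assert (Hd1 : d <= tB - ta) by apply Rmin_l. assert (Hd2 : d <= (9 / 16) / (Rabs M + 1)) by apply Rmin_r.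
  assert (H := Hb y ltac:(lra)).
  assert (Hq : (9 / 16) / (tB - y) > Rabs M + 1).
  { apply (Rmult_lt_reg_r (tB - y)); [lra|]. unfold Rdiv. rewrite Rmult_assoc, Rinv_l, Rmult_1_r by lra.
    assert (tB - y < (9 / 16) / (Rabs M + 1)) by lra.
    apply (Rmult_lt_compat_l (Rabs M + 1)) in H0; [|pose proof (Rabs_pos M); lra].
    replace ((Rabs M + 1) * (9 / 16 / (Rabs M + 1))) with (9 / 16) in H0 by (field; pose proof (Rabs_pos M); lra). lra. }
  assert (M <= Rabs M) by apply Rle_abs.
  assert (- l y <= Rabs (l y)) by (rewrite <- Rabs_Ropp; apply Rle_abs).
  unfold Rdiv in *. lra.
Qed.

Lemma lamsum_sumn n lam t : lamsum n lam t = sumn n (fun i => lam i t).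
Proof. reflexivity. Qed.

Lemma deriv_RInt (f : R -> R) a b c t : (forall s, a < s < b -> continuous f s) ->
  a < c < b -> a < t < b -> is_derive (fun s => RInt f c s) t (f t).
Proof.
  intros Hf Hc Ht. apply (is_derive_RInt f (fun s => RInt f c s) c t); [|apply Hf; auto].
  set (d := Rmin (t - a) (b - t)).
  assert (Hd : 0 < d) by (unfold d; apply Rmin_pos; lra).
  exists (mkposreal d Hd). intros y Hy.
  unfold ball in Hy; simpl in Hy; unfold AbsRing_ball, abs, minus, plus, opp in Hy; simpl in Hy.
  apply Rabs_def2 in Hy.
  assert (d <= t - a) by apply Rmin_l. assert (d <= b - t) by apply Rmin_r.
  apply (RInt_correct (V:=R_CompleteNormedModule)). apply (ex_RInt_continuous (V:=R_CompleteNormedModule)). intros z Hz. apply Hf.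
  split.
  - eapply Rlt_le_trans; [|apply Hz]. apply Rmin_glb_lt; lra.
  - eapply Rle_lt_trans; [apply Hz|]. apply Rmax_lub_lt; lra.
Qed.

Lemma unif (m : nat) (g : nat -> R -> R) ta tB : ta < tB ->
  (forall i, (i < m)%nat -> exists c t', ta <= t' < tB /\ forall t, t' <= t < tB -> c <= g i t) ->
  exists c t', ta <= t' < tB /\ forall i, (i < m)%nat -> forall t, t' <= t < tB -> c <= g i t.
Proof.
  intros Hta. induction m; intros H.
  - exists 0, ta. split; [lra|]. intros; lia.
  - destruct IHm as [c1 [t1 [Ht1 H1]]]; [intros; apply H; lia|].
    destruct (H m (Nat.lt_succ_diag_r m)) as [c2 [t2 [Ht2 H2]]].
    exists (Rmin c1 c2), (Rmax t1 t2). split; [split; [eapply Rle_trans; [|apply Rmax_l]; lra|apply Rmax_lub_lt; lra]|].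
    intros i Hi t Ht. assert (t1 <= t) by (eapply Rle_trans; [apply Rmax_l|apply Ht]).
    assert (t2 <= t) by (eapply Rle_trans; [apply Rmax_r|apply Ht]).
    destruct (Nat.eq_dec i m) as [->|Hne].
    + eapply Rle_trans; [apply Rmin_r|]. apply H2; lra.
    + eapply Rle_trans; [apply Rmin_l|]. apply H1; [lia|lra].
Qed.

Section Main.
Variables (n : nat) (k cb rho0 : R) (lam0 : nat -> R) (tB : R) (lam : nat -> R -> R) (rho : R -> R).
Hypotheses (Hn : (2 <= n)%nat) (Hk : 0 < k) (Hcb : 0 < cb) (Hrho0 : 0 < rho0) (HtB : 0 < tB)
  (Hsol : is_solution n k cb rho0 lam0 tB lam rho).

Lemma kap_pos : 0 < k / INR n.
Proof. apply Rdiv_lt_0_compat; auto. apply lt_0_INR; lia. Qed.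

Lemma sol_ode t : 0 < t < tB ->
  (forall i, (i < n)%nat -> is_derive (lam i) t (- (lam i t) ^ 2 + k / INR n * (rho t - cb))) /\
  is_derive rho t (- rho t * lamsum n lam t).
Proof. intros Ht. destruct Hsol as [_ [_ [_ [_ H]]]]. auto. Qed.

Lemma lam_cont i t : (i < n)%nat -> 0 < t < tB -> continuous (lam i) t.
Proof. intros Hi Ht. destruct (sol_ode t Ht) as [H _]. eapply is_derive_cont; apply H; auto. Qed.

Lemma rho_cont t : 0 < t < tB -> continuous rho t.
Proof. intros Ht. destruct (sol_ode t Ht) as [_ H]. eapply is_derive_cont; apply H. Qed.

Definition Ufun (ta : R) (i : nat) (t : R) : R := RInt (lam i) ta t.
Definition Gfun (ta : R) (t : R) : R := sumn n (fun i => Ufun ta i t).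

Lemma U_deriv ta i t : (i < n)%nat -> 0 < ta < tB -> 0 < t < tB -> is_derive (Ufun ta i) t (lam i t).
Proof. intros Hi Hta Ht. apply (deriv_RInt (lam i) 0 tB ta t); auto. intros; apply lam_cont; auto. Qed.

Lemma G_deriv ta t : 0 < ta < tB -> 0 < t < tB -> is_derive (Gfun ta) t (lamsum n lam t).
Proof.
  intros Hta Ht. rewrite lamsum_sumn. unfold Gfun.
  apply (is_derive_sumn n (fun i t => Ufun ta i t)). intros; apply U_deriv; auto.
Qed.

Lemma P_const ta t : 0 < ta < tB -> 0 < t < tB -> rho t * exp (Gfun ta t) = rho ta.
Proof.
  intros Hta Ht.
  set (P := fun s => rho s * exp (Gfun ta s)).
  assert (HP : forall s, 0 < s < tB -> is_derive P s 0).
  { intros s Hs. unfold P. destruct (sol_ode s Hs) as [_ Hr].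
    eapply is_derive_eq; [apply is_derive_mult'; [exact Hr|apply is_derive_exp_comp, G_deriv; auto]|]. cbv beta. ring. }
  assert (HG : Gfun ta ta = 0).
  { unfold Gfun, Ufun. rewrite <- (Rmult_0_r (INR n)), <- sumn_const. apply sumn_ext. intros. apply (RInt_point (V:=R_CompleteNormedModule)). }
  assert (E : P t = P ta).
  { destruct (Rle_or_lt ta t) as [H|H].
    - assert (H1 := deriv_ub P (fun _ => 0) ta t 0 H). assert (H2 := deriv_lb P (fun _ => 0) ta t 0 H).
      assert (P t - P ta <= 0 * (t - ta)) by (apply H1; [intros; apply HP; lra|intros; lra]).
      assert (0 * (t - ta) <= P t - P ta) by (apply H2; [intros; apply HP; lra|intros; lra]). lra.
    - assert (H1 := deriv_ub P (fun _ => 0) t ta 0 ltac:(lra)). assert (H2 := deriv_lb P (fun _ => 0) t ta 0 ltac:(lra)).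
      assert (P ta - P t <= 0 * (ta - t)) by (apply H1; [intros; apply HP; lra|intros; lra]).
      assert (0 * (ta - t) <= P ta - P t) by (apply H2; [intros; apply HP; lra|intros; lra]). lra. }
  unfold P in E. rewrite HG, exp_0, Rmult_1_r in E. exact E.
Qed.

Lemma rho_pos t : 0 < t < tB -> 0 < rho t.
Proof.
  intros Ht.
  destruct Hsol as [_ [Hr0 [_ [Hrc _]]]].
  assert (Hloc := Hrc _ (locally_ball (rho 0) (mkposreal rho0 Hrho0))).
  destruct Hloc as [d Hd].
  set (s := Rmin (d / 2) (tB / 2)).
  assert (Hd0 := cond_pos d).
  assert (Hs : 0 < s < tB) by (unfold s; split; [apply Rmin_pos; lra|]; eapply Rle_lt_trans; [apply Rmin_r|lra]).
  assert (Hrs : 0 < rho s).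
  { assert (Hb : ball (rho 0) rho0 (rho s)).
    { apply Hd; [|lra]. unfold ball; simpl; unfold AbsRing_ball, abs, minus, plus, opp; simpl.
      assert (s <= d / 2) by apply Rmin_l. rewrite Rabs_right; lra. }
    unfold ball in Hb; simpl in Hb; unfold AbsRing_ball, abs, minus, plus, opp in Hb; simpl in Hb.
    apply Rabs_def2 in Hb. rewrite Hr0 in Hb. lra. }
  assert (E1 := P_const s t Hs Ht). assert (E2 := P_const s s Hs Hs).
  assert (0 < exp (Gfun s t)) by apply exp_pos.
  assert (0 < rho t * exp (Gfun s t)) by lra.
  nra.
Qed.


Lemma Dsmall D : 0 <= D -> let d0 := Rmin (tB / 2) (/ (2 * (D + 1))) in
  0 < d0 /\ d0 <= tB / 2 /\ D * d0 ^ 2 <= / 4.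
Proof.
  intros HD d0. assert (Hp : 0 < / (2 * (D + 1))) by (apply Rinv_0_lt_compat; lra).
  assert (H1 : d0 <= tB / 2) by apply Rmin_l. assert (H2 : d0 <= / (2 * (D + 1))) by apply Rmin_r.
  assert (H0 : 0 < d0) by (apply Rmin_pos; lra).
  assert (H3 : (D + 1) * d0 <= / 2).
  { apply (Rmult_le_compat_l (D + 1)) in H2; [|lra]. rewrite Rinv_mult in H2.
    replace ((D + 1) * (/ 2 * / (D + 1))) with (/ 2) in H2 by (field; lra). exact H2. }
  assert (H4 : d0 <= / 2) by nra.
  split; [auto|split; [auto|]]. simpl. nra.
Qed.

Lemma bounded_near_tB :
  (forall i, (i < n)%nat -> ~ filterlim (fun t => Rabs (lam i t)) (at_left tB) (Rbar_locally p_infty)) ->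
  exists t1 B, 0 < t1 < tB /\ 0 <= B /\ forall t, t1 <= t < tB -> (forall i, (i < n)%nat -> Rabs (lam i t) <= B) /\ Rabs (rho t) <= B.
Proof.
  intros Hnb.
  assert (Hkap := kap_pos).
  set (D := k / INR n * cb).
  assert (HD : 0 <= D) by (unfold D; apply Rmult_le_pos; lra).
  destruct (Dsmall D HD) as [Hd0 [Hd1 Hd2]].
  set (d0 := Rmin (tB / 2) (/ (2 * (D + 1)))) in *.
  set (ta := tB - d0).
  assert (Hta : 0 < ta < tB) by (unfold ta; lra).
  assert (HtaB : tB - ta = d0) by (unfold ta; ring).
  assert (Hh : forall i, (i < n)%nat -> exists c t', ta <= t' < tB /\ forall t, t' <= t < tB -> c <= Ufun ta i t).
  { intros i Hi. destruct (classic (exists c t', ta <= t' < tB /\ forall t, t' <= t < tB -> c <= Ufun ta i t)) as [Hy|Hno]; [exact Hy|].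
    exfalso. apply (Hnb i Hi). apply (blowup_filterlim (lam i) ta tB); [lra|].
    intros t Ht.
    apply (core_bound (lam i) rho (Ufun ta i) ta tB D (k / INR n) cb); auto.
    - lra.
    - left; auto.
    - rewrite HtaB; auto.
    - intros s Hs. apply U_deriv; auto; lra.
    - intros s Hs. destruct (sol_ode s ltac:(lra)) as [H _]. apply H; auto.
    - intros s Hs. left; apply rho_pos; lra.
    - intros c t' Ht'. apply NNPP. intros Hc. apply Hno. exists c, t'. split; auto.
      intros s Hs. apply Rnot_lt_le. intros Hlt. apply Hc. exists s. split; auto. }
  destruct (unif n (Ufun ta) ta tB ltac:(lra) Hh) as [c [t' [Ht' Hc]]].
  set (R := rho ta * exp (- (INR n * c))).
  assert (Hrta : 0 < rho ta) by (apply rho_pos; lra).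
  assert (HR : 0 <= R) by (unfold R; left; apply Rmult_lt_0_compat; [auto|apply exp_pos]).
  assert (Hrho : forall t, t' <= t < tB -> 0 < rho t <= R).
  { intros t Ht. split; [apply rho_pos; lra|].
    assert (E := P_const ta t Hta ltac:(lra)).
    assert (HG : INR n * c <= Gfun ta t).
    { unfold Gfun. rewrite <- sumn_const. apply sumn_le. intros i Hi. apply Hc; auto. }
    assert (Hrt : rho t = rho ta * exp (- Gfun ta t)).
    { rewrite <- E, Rmult_assoc, <- exp_plus. replace (Gfun ta t + - Gfun ta t) with 0 by ring. rewrite exp_0; ring. }
    rewrite Hrt. unfold R. apply Rmult_le_compat_l; [lra|]. apply exp_le_3 || (destruct (Req_dec (Gfun ta t) (INR n * c)) as [->|]; [lra|left; apply exp_increasing; lra]). }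
  set (Q0 := k / INR n * R + 1).
  assert (HQ0 : 1 <= Q0) by (unfold Q0; assert (0 <= k / INR n * R) by (apply Rmult_le_pos; lra); lra).
  assert (Hder : forall i t, (i < n)%nat -> t' <= t < tB ->
            is_derive (lam i) t (- (lam i t) ^ 2 + k / INR n * (rho t - cb))).
  { intros i t Hi Ht. destruct (sol_ode t ltac:(lra)) as [H _]. apply H; auto. }
  assert (Hneg : forall i t, (i < n)%nat -> t' <= t < tB -> Q0 <= Rabs (lam i t) ->
            - (lam i t) ^ 2 + k / INR n * (rho t - cb) < 0).
  { intros i t Hi Ht HQ. assert (Hr := Hrho t Ht).
    assert (k / INR n * (rho t - cb) <= k / INR n * R) by (apply Rmult_le_compat_l; lra).
    assert (Q0 <= (lam i t) ^ 2).
    { rewrite <- pow2_abs. assert (1 <= Rabs (lam i t)) by lra. nra. }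
    unfold Q0 in *. lra. }
  assert (Hkb : forall i, (i < n)%nat -> exists c' t'', t' <= t'' < tB /\ forall t, t'' <= t < tB -> c' <= - Rabs (lam i t)).
  { intros i Hi.
    set (Qu := Rmax (lam i t') Q0).
    assert (Hup : forall t, t' <= t < tB -> lam i t <= Qu).
    { intros t Ht. apply (barrier (lam i) (fun s => - (lam i s) ^ 2 + k / INR n * (rho s - cb)) t' t Qu 1); try lra.
      - intros s Hs. apply Hder; auto; lra.
      - apply Rmax_l.
      - intros s Hs Hq. left. apply (Hneg i s Hi ltac:(lra)).
        assert (Q0 <= Qu) by apply Rmax_r. rewrite Rabs_right; lra. }
    destruct (classic (exists N, forall t, t' <= t < tB -> - N <= lam i t)) as [[N HN]|Hno].
    - exists (- (Rabs N + Rabs Qu)), t'. split; [lra|]. intros t Ht.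
      assert (H1 := HN t Ht). assert (H2 := Hup t Ht).
      assert (N <= Rabs N) by apply Rle_abs. assert (Qu <= Rabs Qu) by apply Rle_abs.
      assert (- Qu <= Rabs Qu) by (rewrite <- Rabs_Ropp; apply Rle_abs).
      assert (Rabs (lam i t) <= Rabs N + Rabs Qu) by (apply Rabs_le; split; assert (0 <= Rabs N) by apply Rabs_pos; lra).
      lra.
    - exfalso. apply (Hnb i Hi). intros P [M HM].
      set (N := Rabs M + Q0 + 1).
      assert (Hs : exists s, t' <= s < tB /\ lam i s < - N).
      { apply NNPP. intros Hc'. apply Hno. exists N. intros t Ht. apply Rnot_lt_le. intros Hlt. apply Hc'. exists t. auto. }
      destruct Hs as [s [Hs Hls]].
      assert (Hdec : forall t, s <= t < tB -> lam i t <= lam i s).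
      { intros t Ht. apply (barrier (lam i) (fun s => - (lam i s) ^ 2 + k / INR n * (rho s - cb)) s t (lam i s) 1); try lra.
        - intros u Hu. apply Hder; auto; lra.
        - intros u Hu Hq. left. apply (Hneg i u Hi ltac:(lra)).
          assert (0 <= Rabs M) by apply Rabs_pos. unfold N in Hls.
          rewrite Rabs_left; lra. }
      exists (mkposreal (tB - s) ltac:(lra)). intros y Hy Hyt. apply HM.
      unfold ball in Hy; simpl in Hy; unfold AbsRing_ball, abs, minus, plus, opp in Hy; simpl in Hy.
      rewrite Rabs_left1 in Hy by lra.
      assert (lam i y <= lam i s) by (apply Hdec; lra).
      assert (- lam i y <= Rabs (lam i y)) by (rewrite <- Rabs_Ropp; apply Rle_abs).
      assert (M <= Rabs M) by apply Rle_abs.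
      assert (0 <= Rabs M) by apply Rabs_pos. unfold N in Hls. lra. }
  destruct (unif n (fun i t => - Rabs (lam i t)) t' tB ltac:(lra) Hkb) as [cB [t1 [Ht1 HcB]]].
  exists t1, (Rmax (- cB) R). split; [lra|]. split; [eapply Rle_trans; [|apply Rmax_r]; auto|].
  intros t Ht. split.
  - intros i Hi. assert (H := HcB i Hi t Ht). eapply Rle_trans; [|apply Rmax_l]. lra.
  - assert (H := Hrho t ltac:(lra)). rewrite Rabs_right by lra. eapply Rle_trans; [|apply Rmax_r]. lra.
Qed.

End Main.

Lemma is_derive_shift (f : R -> R) (t0 s l : R) : is_derive f (s - t0) l ->
  is_derive (fun u => f (u - t0)) s l.
Proof.
  intros H.
  assert (Hg : is_derive (fun u => u - t0) s 1) by (auto_derive; [auto|ring]).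
  assert (Hc := is_derive_comp f (fun u => u - t0) s l 1 H Hg).
  eapply is_derive_eq; [exact Hc|]. unfold scal; simpl; unfold mult; simpl. ring.
Qed.

Theorem proposition2p1 (n : nat) (k cb rho0 : R) (lam0 : nat -> R)
    (tB : R) (lam : nat -> R -> R) (rho : R -> R) :
  (2 <= n)%nat -> 0 < k -> 0 < cb -> 0 < rho0 ->
  (forall i j, (i <= j)%nat -> (j < n)%nat -> lam0 i <= lam0 j) ->
  0 < tB ->
  is_solution n k cb rho0 lam0 tB lam rho ->
  (forall (T' : R) (lam' : nat -> R -> R) (rho' : R -> R),
     tB < T' -> is_solution n k cb rho0 lam0 T' lam' rho' ->
     ~ (forall t, 0 <= t < tB ->
          rho' t = rho t /\ (forall i, (i < n)%nat -> lam' i t = lam i t))) ->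
  exists i, (i < n)%nat /\
    filterlim (fun t => Rabs (lam i t)) (at_left tB) (Rbar_locally p_infty).
Proof.
  intros Hn Hk Hcb Hrho0 Hord HtB Hsol Hmax.
  apply NNPP; intros Hno.
  assert (Hnb : forall i, (i < n)%nat -> ~ filterlim (fun t => Rabs (lam i t)) (at_left tB) (Rbar_locally p_infty))
    by (intros i Hi Hf; apply Hno; exists i; auto).
  destruct (bounded_near_tB n k cb rho0 lam0 tB lam rho Hn Hk Hcb Hrho0 HtB Hsol Hnb) as [t1 [B [Ht1 [HB Hbd]]]].
  assert (Hkap : 0 < k / INR n) by (apply (kap_pos n k); auto).
  set (kap := k / INR n) in *.
  set (C := Rmax B 1).
  assert (HC : 1 <= C) by apply Rmax_r. assert (HBC : B <= C) by apply Rmax_l.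
  set (z := fun i t => if (i <? n)%nat then lam i t else rho t).
  assert (Hz_lam : forall i t, (i < n)%nat -> z i t = lam i t).
  { intros i t Hi. unfold z. replace (i <? n)%nat with true by (symmetry; apply Nat.ltb_lt; auto). reflexivity. }
  assert (Hz_rho : forall t, z n t = rho t).
  { intros t. unfold z. replace (n <? n)%nat with false by (symmetry; apply Nat.ltb_ge; auto). reflexivity. }
  assert (Hzb : forall t, t1 <= t < tB -> forall i, (i <= n)%nat -> Rabs (z i t) <= C).
  { intros t Ht i Hi. destruct (Hbd t Ht) as [H1 H2].
    destruct (Nat.eq_dec i n) as [->|Hne].
    - rewrite Hz_rho. lra.
    - rewrite Hz_lam by lia. assert (Rabs (lam i t) <= B) by (apply H1; lia). lra. }
  set (M := Mc n kap cb C).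
  assert (HM : 0 < M) by (apply M_pos; lra).
  set (h := / (2 * M)).
  assert (Hh : 0 < h) by (apply Rinv_0_lt_compat; lra).
  assert (HhM : h < / M) by (unfold h; apply Rinv_lt_contravar; nra).
  set (t0 := Rmax t1 (tB - h / 2)).
  assert (Ht0 : t1 <= t0 < tB) by (unfold t0; split; [apply Rmax_l|apply Rmax_lub_lt; lra]).
  assert (Ht0' : tB - h / 2 <= t0) by (unfold t0; apply Rmax_r).
  set (x0 := fun i => z i t0).
  assert (Hx0 : forall i, (i <= n)%nat -> Rabs (x0 i) <= C) by (intros; apply Hzb; auto; lra).
  set (y := fun i s => ysol n kap cb x0 i (s - t0)).
  assert (Hyder : forall s, Rabs (s - t0) < / M -> ODEat n kap cb y s).
  { intros s Hs. split.
    - intros i Hi. apply is_derive_shift. apply (ysol_deriv_lam n kap cb C x0); auto; lra.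
    - apply is_derive_shift. apply (ysol_deriv_rho n kap cb C x0); auto; lra. }
  assert (Hzder : forall s, 0 < s < tB -> ODEat n kap cb z s).
  { intros s Hs. destruct (sol_ode n k cb rho0 lam0 tB lam rho Hsol s Hs) as [H1 H2].
    assert (Hsum : sumn n (fun l => z l s) = lamsum n lam s).
    { rewrite lamsum_sumn. apply sumn_ext. intros; apply Hz_lam; auto. }
    split.
    - intros i Hi. rewrite !Hz_lam, Hz_rho by auto.
      apply (is_derive_ext (lam i)); [intros; symmetry; apply Hz_lam; auto|]. apply H1; auto.
    - rewrite Hz_rho, Hsum. apply (is_derive_ext rho); [intros; symmetry; apply Hz_rho|]. auto. }
  assert (Huniq : forall t, t0 <= t < tB -> forall i, (i <= n)%nat -> z i t = y i t).
  { intros t Ht. apply (uniq_ode n kap cb z y t0 t (2 * C)); try lra.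
    - intros s Hs. split; [apply Hzder; lra|apply Hyder]. rewrite Rabs_right; lra.
    - intros s Hs i Hi. split.
      + assert (Rabs (z i s) <= C) by (apply Hzb; auto; lra). lra.
      + unfold y. apply (ysol_bound n kap cb C x0); auto; try lra. rewrite Rabs_right by lra. fold M. fold h. lra.
    - intros i Hi. unfold y. rewrite Rminus_diag, ysol_0. reflexivity. }
  set (T' := t0 + h).
  assert (HT' : tB < T') by (unfold T'; lra).
  set (lam' := fun i t => if Rlt_dec t tB then lam i t else y i t).
  set (rho' := fun t => if Rlt_dec t tB then rho t else y n t).
  apply (Hmax T' lam' rho' HT').
  2:{ intros t Ht. unfold lam', rho'. destruct (Rlt_dec t tB); [|lra]. split; auto. }
  destruct Hsol as [Hi0 [Hr0 [Hlc [Hrc Hode]]]].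
  assert (Hloc_left : forall t, t < tB -> locally t (fun s => s < tB)).
  { intros t Ht. exists (mkposreal (tB - t) ltac:(lra)). intros s Hs.
    unfold ball in Hs; simpl in Hs; unfold AbsRing_ball, abs, minus, plus, opp in Hs; simpl in Hs.
    apply Rabs_def2 in Hs. lra. }
  assert (Hloc_right : forall t, tB <= t -> locally t (fun s => t0 < s)).
  { intros t Ht. exists (mkposreal (t - t0) ltac:(lra)). intros s Hs.
    unfold ball in Hs; simpl in Hs; unfold AbsRing_ball, abs, minus, plus, opp in Hs; simpl in Hs.
    apply Rabs_def2 in Hs. lra. }
  assert (Hlam'y : forall i s, (i <= n)%nat -> t0 < s -> (if Rlt_dec s tB then z i s else y i s) = y i s).
  { intros i s Hi Hs. destruct (Rlt_dec s tB); [apply Huniq; auto; lra|reflexivity]. }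
  split; [|split; [|split; [|split]]].
  - intros i Hi. unfold lam'. destruct (Rlt_dec 0 tB); [auto|lra].
  - unfold rho'. destruct (Rlt_dec 0 tB); [auto|lra].
  - intros i Hi. unfold lam' at 2. destruct (Rlt_dec 0 tB); [|lra].
    apply (filterlim_ext_loc (lam i)); [|apply Hlc; auto].
    exists (mkposreal tB HtB). intros s Hs Hs0.
    unfold ball in Hs; simpl in Hs; unfold AbsRing_ball, abs, minus, plus, opp in Hs; simpl in Hs.
    apply Rabs_def2 in Hs. unfold lam'. destruct (Rlt_dec s tB); [reflexivity|lra].
  - unfold rho' at 2. destruct (Rlt_dec 0 tB); [|lra].
    apply (filterlim_ext_loc rho); [|apply Hrc; auto].
    exists (mkposreal tB HtB). intros s Hs Hs0.
    unfold ball in Hs; simpl in Hs; unfold AbsRing_ball, abs, minus, plus, opp in Hs; simpl in Hs.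
    apply Rabs_def2 in Hs. unfold rho'. destruct (Rlt_dec s tB); [reflexivity|lra].
  - intros t Ht.
    destruct (Rlt_dec t tB) as [Hlt|Hge].
    + destruct (Hode t ltac:(lra)) as [H1 H2].
      assert (Hsum : lamsum n lam' t = lamsum n lam t).
      { rewrite !lamsum_sumn. apply sumn_ext. intros l Hl. unfold lam'. destruct (Rlt_dec t tB); [reflexivity|lra]. }
      assert (Hl't : forall i, lam' i t = lam i t) by (intros; unfold lam'; destruct (Rlt_dec t tB); [reflexivity|lra]).
      assert (Hr't : rho' t = rho t) by (unfold rho'; destruct (Rlt_dec t tB); [reflexivity|lra]).
      split.
      * intros i Hi. rewrite Hl't, Hr't. apply (is_derive_ext_loc (lam i)); [|apply H1; auto].
        apply (filter_imp (fun s => s < tB)); [|apply Hloc_left; auto].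
        intros s Hs. unfold lam'. destruct (Rlt_dec s tB); [reflexivity|lra].
      * rewrite Hr't, Hsum. apply (is_derive_ext_loc rho); [|auto].
        apply (filter_imp (fun s => s < tB)); [|apply Hloc_left; auto].
        intros s Hs. unfold rho'. destruct (Rlt_dec s tB); [reflexivity|lra].
    + assert (HtB' : tB <= t) by lra.
      assert (Hyd := Hyder t ltac:(rewrite Rabs_right; unfold T' in Ht; lra)).
      destruct Hyd as [H1 H2].
      assert (Hl't : forall i, (i <= n)%nat -> lam' i t = y i t)
        by (intros; unfold lam'; destruct (Rlt_dec t tB); [lra|reflexivity]).
      assert (Hr't : rho' t = y n t) by (unfold rho'; destruct (Rlt_dec t tB); [lra|reflexivity]).
      assert (Hsum : lamsum n lam' t = sumn n (fun l => y l t)).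
      { rewrite lamsum_sumn. apply sumn_ext. intros l Hl. apply Hl't; lia. }
      split.
      * intros i Hi. rewrite Hl't, Hr't by lia. apply (is_derive_ext_loc (y i)); [|apply H1; auto].
        apply (filter_imp (fun s => t0 < s)); [|apply Hloc_right; auto].
        intros s Hs. unfold lam'. rewrite <- (Hlam'y i s) by (auto; lia).
        destruct (Rlt_dec s tB); [|reflexivity]. rewrite Hz_lam; auto.
      * rewrite Hr't, Hsum. apply (is_derive_ext_loc (y n)); [|auto].
        apply (filter_imp (fun s => t0 < s)); [|apply Hloc_right; auto].
        intros s Hs. unfold rho'. rewrite <- (Hlam'y n s) by (auto; lia).
        destruct (Rlt_dec s tB); [|reflexivity]. rewrite Hz_rho; reflexivity.
Qed.
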